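(* Let $n \geq 1$. The model $U(n)_{\wedge,\to}$ consists exactly of those points $x \in U(n)$ such that every $y \in U(n)$ with $y \geq x$ is separated.
   Context: Fix $n\ge1$ and variables $p_1,\dots,p_n$; $2^n=\{0,1\}^n$ with componentwise order. A model is $(M,\le,c)$, $(M,\le)$ a poset, $c:M\to 2^n$ order-preserving, with intuitionistic Kripke semantics ($x\models p_i$ iff $c(x)_i=1$; $x\models\varphi\to\psi$ iff every $y\ge x$ satisfying $\varphi$ satisfies $\psi$; etc.). A p-morphism of models is an order- and colour-preserving map $f$ such that $f(x)\le y$ implies $f(x')=y$ for some $x'\ge x$. A generated submodel is an up-set with the restricted structure. A point $x$ is separated if for some variable $q$, $x\not\models q$ but all $y>x$ satisfy $q$. $M^s$ is the set of separated points of $M$ with restricted order and colouring; all chains in $M^s$ have at most $n$ elements. $U(n)$, the $n$-universal model: take the canonical model of IPC on $p_1,\dots,p_n$ (points are the prime filters of the free Heyting algebra on $p_1,\dots,p_n$, ordered by inclusion, with $c(x)_i=1$ iff $p_i\in x$) and let $U(n)$ be its generated submodel of points $x$ with finite up-set ${\uparrow}x$. It is a standard fact that for every model $N$ of finite depth (chains of bounded finite length) there is a unique p-morphism $N\to U(n)$. For a model $M$, let $f:M^s\to U(n)$ be the unique p-morphism and define $M_{\wedge,\to}:=f(M^s)$, a generated submodel of $U(n)$. In particular $U(n)_{\wedge,\to}$ is this construction applied to $M=U(n)$. *)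

(* Defs.v *)
(* Kripke models for IPC on variables p_0,...,p_{n-1}
   (the paper's p_1..p_n, shifted to 0-based indices). *)
From Stdlib Require Import List.



Record model := Model {
  pt : Type;
  le : pt -> pt -> Prop;
  col : pt -> nat -> Prop   (* col x i  <->  c(x)_i = 1, i.e. x |= p_i *)
}.

Definition lt (M : model) (x y : pt M) : Prop := le M x y /\ x <> y.

Definition pmorph (n : nat) (M N : model) (f : pt M -> pt N) : Prop :=
  (forall x y, le M x y -> le N (f x) (f y)) /\
  (forall x i, i < n -> (col N (f x) i <-> col M x i)) /\
  (forall x y, le N (f x) y -> exists x', le M x x' /\ f x' = y).

Definition separated (n : nat) (M : model) (x : pt M) : Prop :=
  exists q, q < n /\ ~ col M x q /\ (forall y, lt M x y -> col M y q).

Definition sep_model (n : nat) (M : model) : model :=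
  {| pt := { x : pt M | separated n M x };
     le := fun x y => le M (proj1_sig x) (proj1_sig y);
     col := fun x i => col M (proj1_sig x) i |}.

Inductive form : Type :=
| Var : nat -> form
| Bot : form
| And : form -> form -> form
| Or  : form -> form -> form
| Imp : form -> form -> form.

Fixpoint wf (n : nat) (f : form) : Prop :=
  match f with
  | Var i => i < n
  | Bot => True
  | And a b | Or a b | Imp a b => wf n a /\ wf n b
  end.

Inductive Der (G : form -> Prop) : form -> Prop :=
| D_hyp : forall a, G a -> Der G a
| D_K : forall a b, Der G (Imp a (Imp b a))
| D_S : forall a b c,
    Der G (Imp (Imp a (Imp b c)) (Imp (Imp a b) (Imp a c)))
| D_and1 : forall a b, Der G (Imp (And a b) a)
| D_and2 : forall a b, Der G (Imp (And a b) b)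
| D_andI : forall a b, Der G (Imp a (Imp b (And a b)))
| D_or1 : forall a b, Der G (Imp a (Or a b))
| D_or2 : forall a b, Der G (Imp b (Or a b))
| D_orE : forall a b c,
    Der G (Imp (Imp a c) (Imp (Imp b c) (Imp (Or a b) c)))
| D_efq : forall a, Der G (Imp Bot a)
| D_mp : forall a b, Der G (Imp a b) -> Der G a -> Der G b.

(** prime theories over p_0..p_{n-1} = prime filters of the free Heyting
    algebra on n generators (via the Lindenbaum-Tarski algebra) *)
Definition prime_theory (n : nat) (G : form -> Prop) : Prop :=
  (forall a, G a -> wf n a) /\
  (forall a, wf n a -> Der G a -> G a) /\
  ~ G Bot /\
  (forall a b, G (Or a b) -> G a \/ G b).

Definition can_pt (n : nat) : Type := { G : form -> Prop | prime_theory n G }.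

Definition canonical_model (n : nat) : model :=
  {| pt := can_pt n;
     le := fun x y => forall a, proj1_sig x a -> proj1_sig y a;
     col := fun x i => proj1_sig x (Var i) |}.

Definition finite_up (M : model) (x : pt M) : Prop :=
  exists l : list (pt M), forall y, le M x y -> In y l.

Definition U (n : nat) : model :=
  {| pt := { x : pt (canonical_model n) | finite_up (canonical_model n) x };
     le := fun x y => le (canonical_model n) (proj1_sig x) (proj1_sig y);
     col := fun x i => col (canonical_model n) (proj1_sig x) i |}.

(** M_{wedge,->} := f(M^s) for the (unique) p-morphism f : M^s -> U(n) *)
Definition M_and_imp (n : nat) (M : model) (x : pt (U n)) : Prop :=
  exists f : pt (sep_model n M) -> pt (U n),
    pmorph n (sep_model n M) (U n) f /\ exists s, f s = x.

(* Main.v *)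
Require Import Defs.
From Stdlib Require Import List Arith Lia Cantor Classical ClassicalEpsilon
  FunctionalExtensionality PropExtensionality ProofIrrelevance.
Require Import Defs.

Fixpoint forces (M : model) (x : pt M) (a : form) : Prop :=
  match a with
  | Var i => col M x i
  | Bot => False
  | And a b => forces M x a /\ forces M x b
  | Or a b => forces M x a \/ forces M x b
  | Imp a b => forall y, Defs.le M x y -> forces M y a -> forces M y b
  end.

Definition goodM (M : model) : Prop :=
  (forall x, Defs.le M x x) /\
  (forall x y z, Defs.le M x y -> Defs.le M y z -> Defs.le M x z) /\
  (forall x y i, Defs.le M x y -> col M x i -> col M y i).

Lemma persist M (HM : goodM M) a :
  forall x y, Defs.le M x y -> forces M x a -> forces M y a.
Proof.
  destruct HM as [Hr [Ht Hc]].
  induction a; simpl; intros x y Hxy H.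
  - eauto.
  - exact H.
  - destruct H; split; eauto.
  - destruct H; [left|right]; eauto.
  - intros z Hz. apply H. eauto.
Qed.

Lemma sound M (HM : goodM M) G a (H : Der G a) :
  forall x, (forall g, G g -> forces M x g) -> forces M x a.
Proof.
  pose proof (persist M HM) as P.
  destruct HM as [Hr [Ht Hc]].
  induction H; intros x HG; simpl.
  - auto.
  - intros y Hy Ha z Hz Hb. eauto.
  - intros y Hy H1 z Hz H2 w Hw H3.
    assert (Hyw : Defs.le M y w) by eauto.
    specialize (H1 w Hyw H3). specialize (H2 w Hw H3).
    exact (H1 w (Hr w) H2).
  - intros y _ [H1 H2]; exact H1.
  - intros y _ [H1 H2]; exact H2.
  - intros y Hy H1 z Hz H2. split; eauto.
  - intros y _ H1; left; exact H1.
  - intros y _ H1; right; exact H1.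
  - intros y Hy H1 z Hz H2 w Hw [H3|H3].
    + eapply H1; eauto.
    + eapply H2; eauto.
  - intros y _ [].
  - specialize (IHDer1 x HG). specialize (IHDer2 x HG). simpl in IHDer1.
    exact (IHDer1 x (Hr x) IHDer2).
Qed.

Lemma Der_weak G a : Der G a -> forall G', (forall x, G x -> G' x) -> Der G' a.
Proof.
  induction 1; intros G' HG; try (econstructor; eauto; fail).
  all: eapply D_mp; eauto.
Qed.

Lemma Der_id G a : Der G (Imp a a).
Proof.
  eapply D_mp. eapply D_mp. apply (D_S G a (Imp a a) a).
  apply D_K. apply D_K.
Qed.

Lemma deduction G c d : Der (fun x => G x \/ x = c) d -> Der G (Imp c d).
Proof.
  induction 1.
  - destruct H as [H|H].
    + eapply D_mp. apply D_K. apply D_hyp; exact H.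
    + subst. apply Der_id.
  - eapply D_mp; [apply D_K|]; first [apply D_K|apply D_S|apply D_and1|apply D_and2|apply D_andI|apply D_or1|apply D_or2|apply D_orE|apply D_efq].
  - eapply D_mp; [apply D_K|]; first [apply D_K|apply D_S|apply D_and1|apply D_and2|apply D_andI|apply D_or1|apply D_or2|apply D_orE|apply D_efq].
  - eapply D_mp; [apply D_K|]; first [apply D_K|apply D_S|apply D_and1|apply D_and2|apply D_andI|apply D_or1|apply D_or2|apply D_orE|apply D_efq].
  - eapply D_mp; [apply D_K|]; first [apply D_K|apply D_S|apply D_and1|apply D_and2|apply D_andI|apply D_or1|apply D_or2|apply D_orE|apply D_efq].
  - eapply D_mp; [apply D_K|]; first [apply D_K|apply D_S|apply D_and1|apply D_and2|apply D_andI|apply D_or1|apply D_or2|apply D_orE|apply D_efq].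
  - eapply D_mp; [apply D_K|]; first [apply D_K|apply D_S|apply D_and1|apply D_and2|apply D_andI|apply D_or1|apply D_or2|apply D_orE|apply D_efq].
  - eapply D_mp; [apply D_K|]; first [apply D_K|apply D_S|apply D_and1|apply D_and2|apply D_andI|apply D_or1|apply D_or2|apply D_orE|apply D_efq].
  - eapply D_mp; [apply D_K|]; first [apply D_K|apply D_S|apply D_and1|apply D_and2|apply D_andI|apply D_or1|apply D_or2|apply D_orE|apply D_efq].
  - eapply D_mp; [apply D_K|]; first [apply D_K|apply D_S|apply D_and1|apply D_and2|apply D_andI|apply D_or1|apply D_or2|apply D_orE|apply D_efq].
  - eapply D_mp. eapply D_mp. apply D_S. exact IHDer1. exact IHDer2.
Qed.

Definition setc {n} (c : can_pt n) : form -> Prop := proj1_sig c.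

Lemma ct_wf n (c : can_pt n) a : setc c a -> wf n a.
Proof. destruct c as [G HG]; unfold setc; simpl; apply HG. Qed.

Lemma ct_closed n (c : can_pt n) a : wf n a -> Der (setc c) a -> setc c a.
Proof. destruct c as [G HG]; unfold setc; simpl; apply HG. Qed.

Lemma ct_bot n (c : can_pt n) : ~ setc c Bot.
Proof. destruct c as [G HG]; unfold setc; simpl; apply HG. Qed.

Lemma ct_or n (c : can_pt n) a b : setc c (Or a b) -> setc c a \/ setc c b.
Proof. destruct c as [G HG]; unfold setc; simpl; apply HG. Qed.

Lemma ct_mp n (c : can_pt n) a b : setc c (Imp a b) -> setc c a -> setc c b.
Proof.
  intros H1 H2. apply ct_closed.
  - apply ct_wf in H1. simpl in H1. tauto.
  - eapply D_mp; apply D_hyp; eauto.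
Qed.

Lemma can_eq n (x y : can_pt n) : (forall a, setc x a <-> setc y a) -> x = y.
Proof.
  destruct x as [G hG], y as [H hH]; unfold setc; simpl; intro E.
  assert (G = H) by (extensionality a; apply propositional_extensionality; auto).
  subst. f_equal. apply proof_irrelevance.
Qed.

Lemma U_eq n (x y : pt (U n)) : proj1_sig x = proj1_sig y -> x = y.
Proof.
  destruct x as [x hx], y as [y hy]; simpl; intros E; subst.
  f_equal; apply proof_irrelevance.
Qed.

Definition SM n := sep_model n (U n).

Lemma sep_eq n (x y : pt (SM n)) : proj1_sig x = proj1_sig y -> x = y.
Proof.
  destruct x as [x hx], y as [y hy]; simpl; intros E; subst.
  f_equal; apply proof_irrelevance.
Qed.

Definition car {n} (s : pt (SM n)) : can_pt n := proj1_sig (proj1_sig s).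

Lemma car_eq n (x y : pt (SM n)) : car x = car y -> x = y.
Proof. intro E. apply sep_eq, U_eq. exact E. Qed.

Lemma goodSM n : goodM (SM n).
Proof.
  split; [|split]; simpl; auto.
Qed.

Definition Th n (s : pt (SM n)) (a : form) : Prop := wf n a /\ forces (SM n) s a.

Lemma Th_prime n s : prime_theory n (Th n s).
Proof.
  split; [|split; [|split]].
  - intros a [H _]; exact H.
  - intros a Hw HD. split; [exact Hw|].
    eapply sound; [apply goodSM|exact HD|].
    intros g [_ Hg]; exact Hg.
  - intros [_ []].
  - intros a b [Hw [H|H]]; simpl in Hw; [left|right]; split; tauto.
Qed.

Definition Thc n s : can_pt n := exist _ (Th n s) (Th_prime n s).

Lemma Th_mono n (s t : pt (SM n)) : Defs.le (SM n) s t -> forall a, Th n s a -> Th n t a.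
Proof.
  intros H a [Hw Hf]; split; [exact Hw|]. eapply persist; eauto. apply goodSM.
Qed.

Lemma forces_fold n (u : pt (SM n)) L psi :
  In psi L -> forces (SM n) u psi -> forces (SM n) u (fold_right Or Bot L).
Proof.
  induction L; simpl; [tauto|].
  intros [->|H] Hf; [left; exact Hf|right; auto].
Qed.

Lemma key_aux n : forall k (s : pt (SM n)) (l : list (can_pt n)),
  length l <= k ->
  (forall c : can_pt n, (forall a, setc (car s) a -> setc c a) -> In c l) ->
  forall G : can_pt n, (forall a, Th n s a -> setc G a) ->
  exists s', Defs.le (SM n) s s' /\ forall a, setc G a <-> Th n s' a.
Proof.
  induction k; intros s l Hlen Hcov G Hsub.
  - assert (In (car s) l) by (apply Hcov; auto).
    destruct l; simpl in *; [contradiction|lia].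
  - destruct (classic (forall a, setc G a -> Th n s a)) as [Hall|Hnot].
    + exists s; split; [simpl; auto|]. intro a; split; auto.
    + apply not_all_ex_not in Hnot. destruct Hnot as [phi Hphi].
      assert (HGphi : setc G phi) by tauto.
      assert (HnTh : ~ Th n s phi) by tauto.
      clear Hphi.
      destruct (classic (exists u, Defs.lt (SM n) s u /\ forall a, Th n u a -> setc G a))
        as [[u [[Hsu Hne] HuG]] | Hno].
      * assert (Heq : forall x y : can_pt n, {x = y} + {x <> y})
          by (intros; apply excluded_middle_informative).
        destruct (IHk u (remove Heq (car s) l)) with (G := G) as [s' [Hus' Hs']]; auto.
        -- assert (In (car s) l) by (apply Hcov; auto).
           pose proof (remove_length_lt Heq l (car s) H). lia.
        -- intros c Hc. apply in_in_remove.
           ++ intros ->. apply Hne. apply car_eq. apply can_eq. intro a; split; auto.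
              apply Hsu.
           ++ apply Hcov. intros a Ha. apply Hc. apply Hsu. exact Ha.
        -- exists s'; split; auto. intros a Ha. apply Hus'. apply Hsu. exact Ha.
      * exfalso.
        assert (Hex : forall c : can_pt n, exists psi, wf n psi /\ ~ setc G psi /\
                  forall u, car u = c -> Defs.lt (SM n) s u -> forces (SM n) u psi).
        { intro c. destruct (classic (exists u, car u = c /\ Defs.lt (SM n) s u))
            as [[u0 [Hu0 Hlt0]]|Hn].
          - assert (~ forall a, Th n u0 a -> setc G a) by (intro; apply Hno; eauto).
            apply not_all_ex_not in H. destruct H as [psi Hpsi].
            exists psi. assert (Th n u0 psi /\ ~ setc G psi) as [[Hw Hf] HG] by tauto.
            split; [exact Hw|split; [exact HG|]].
            intros u Hu _. assert (u = u0) by (apply car_eq; congruence). subst; exact Hf.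
          - exists Bot. split; [exact I|split; [apply ct_bot|]].
            intros u Hu Hl. exfalso; apply Hn; eauto. }
        set (psi := fun c => proj1_sig (constructive_indefinite_description _ (Hex c))).
        assert (Hpsi : forall c, wf n (psi c) /\ ~ setc G (psi c) /\
                  forall u, car u = c -> Defs.lt (SM n) s u -> forces (SM n) u (psi c))
          by (intro c; unfold psi; destruct (constructive_indefinite_description _ (Hex c)); exact a).
        set (Psi := fold_right Or Bot (map psi l)).
        assert (HwPsi : wf n Psi).
        { unfold Psi. clear -Hpsi. induction l; simpl; [exact I|]. split; auto. apply Hpsi. }
        assert (HnPsi : ~ setc G Psi).
        { unfold Psi. clear -Hpsi. induction l; simpl; [apply ct_bot|].
          intro H. apply ct_or in H. destruct H as [H|H]; [|auto]. apply (Hpsi a); exact H. }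
        apply HnPsi. eapply ct_mp; [|exact HGphi].
        apply Hsub. split.
        { simpl. split; [eapply ct_wf; eauto|exact HwPsi]. }
        simpl. intros y Hy Hfy.
        destruct (classic (s = y)) as [<-|Hne].
        { exfalso. apply HnTh. split; [eapply ct_wf; eauto|exact Hfy]. }
        unfold Psi. apply forces_fold with (psi := psi (car y)).
        -- apply in_map. apply Hcov. exact Hy.
        -- apply Hpsi; [reflexivity|split; auto].
Qed.

Lemma key n (s : pt (SM n)) (G : can_pt n) : (forall a, Th n s a -> setc G a) ->
  exists s', Defs.le (SM n) s s' /\ forall a, setc G a <-> Th n s' a.
Proof.
  destruct (proj2_sig (proj1_sig s)) as [l Hl].
  apply (key_aux n (length l) s l (le_n _)).
  intros c Hc. apply Hl. exact Hc.
Qed.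

Definition gsel n (c : can_pt n) : can_pt n :=
  match excluded_middle_informative (exists u : pt (SM n), car u = c) with
  | left h => Thc n (proj1_sig (constructive_indefinite_description _ h))
  | right _ => c
  end.

Lemma Thc_fin n (s : pt (SM n)) : finite_up (canonical_model n) (Thc n s).
Proof.
  destruct (proj2_sig (proj1_sig s)) as [l Hl].
  exists (map (gsel n) l). intros G HG.
  destruct (key n s G HG) as [s' [Hss' Hs']].
  assert (Hin : In (car s') l).
  { apply Hl. intros a Ha. apply Hss'. exact Ha. }
  replace G with (gsel n (car s')); [apply in_map; exact Hin|].
  unfold gsel. destruct (excluded_middle_informative _) as [h|h].
  - destruct (constructive_indefinite_description _ h) as [u Hu]; simpl.
    apply car_eq in Hu. subst u. symmetry. apply can_eq. exact Hs'.
  - exfalso. apply h. eauto.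
Qed.

Definition fmap n (s : pt (SM n)) : pt (U n) := exist _ (Thc n s) (Thc_fin n s).

Lemma fmap_pmorph n : pmorph n (SM n) (U n) (fmap n).
Proof.
  split; [|split].
  - intros x y Hxy a Ha. exact (Th_mono n x y Hxy a Ha).
  - intros x i Hi. simpl. unfold Th. simpl. tauto.
  - intros x y Hy. destruct (key n x (proj1_sig y) Hy) as [s' [H1 H2]].
    exists s'. split; [exact H1|]. apply U_eq. simpl.
    symmetry. apply can_eq. exact H2.
Qed.

Fixpoint enc (f : form) : nat :=
  match f with
  | Var i => to_nat (0, i)
  | Bot => to_nat (1, 0)
  | And a b => to_nat (2, to_nat (enc a, enc b))
  | Or a b => to_nat (3, to_nat (enc a, enc b))
  | Imp a b => to_nat (4, to_nat (enc a, enc b))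
  end.

Lemma to_nat_inj p q : to_nat p = to_nat q -> p = q.
Proof. intro H. rewrite <- (cancel_of_to p), <- (cancel_of_to q), H. reflexivity. Qed.

Lemma enc_inj : forall a b, enc a = enc b -> a = b.
Proof.
  induction a; destruct b; cbn [enc]; intro H; apply to_nat_inj in H;
    try discriminate; try reflexivity.
  1: apply (f_equal snd) in H; cbn [snd] in H; subst; reflexivity.
  all: apply (f_equal snd) in H; cbn [snd] in H; apply to_nat_inj in H;
    pose proof (f_equal fst H) as H1; pose proof (f_equal snd H) as H2;
    cbn [fst snd] in H1, H2;
    rewrite (IHa1 _ H1), (IHa2 _ H2); reflexivity.
Qed.

Definition dec (k : nat) : form :=
  match excluded_middle_informative (exists f, enc f = k) with
  | left h => proj1_sig (constructive_indefinite_description _ h)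
  | right _ => Bot
  end.

Lemma dec_enc f : dec (enc f) = f.
Proof.
  unfold dec. destruct (excluded_middle_informative _) as [h|h].
  - destruct (constructive_indefinite_description _ h) as [g Hg]; simpl.
    apply enc_inj; exact Hg.
  - exfalso; apply h; eauto.
Qed.

Fixpoint chain n (G0 : form -> Prop) (b : form) (k : nat) : form -> Prop :=
  match k with
  | 0 => G0
  | S k => fun c => chain n G0 b k c \/
      (c = dec k /\ wf n (dec k) /\ ~ Der (fun x => chain n G0 b k x \/ x = dec k) b)
  end.

Definition lim n G0 b (c : form) : Prop := exists k, chain n G0 b k c.

Lemma chain_mono n G0 b k m : k <= m -> forall c, chain n G0 b k c -> chain n G0 b m c.
Proof.
  induction 1; auto. intros c H0. simpl. left. auto.
Qed.

Lemma compact n G0 b c : Der (lim n G0 b) c -> exists k, Der (chain n G0 b k) c.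
Proof.
  induction 1; try (exists 0; first [apply D_K|apply D_S|apply D_and1|apply D_and2|apply D_andI|apply D_or1|apply D_or2|apply D_orE|apply D_efq]; fail).
  - destruct H as [k Hk]. exists k. apply D_hyp; exact Hk.
  - destruct IHDer1 as [k1 H1], IHDer2 as [k2 H2]. exists (max k1 k2).
    eapply D_mp; [eapply Der_weak; [exact H1|] | eapply Der_weak; [exact H2|]];
    intros; (eapply chain_mono; [|eauto]); lia.
Qed.

Lemma chain_nd n G0 b : ~ Der G0 b -> forall k, ~ Der (chain n G0 b k) b.
Proof.
  intros H0 k. induction k; [exact H0|].
  simpl. intro HD.
  destruct (classic (wf n (dec k) /\ ~ Der (fun x => chain n G0 b k x \/ x = dec k) b)) as [Hc|Hc].
  - apply (proj2 Hc). eapply Der_weak; [exact HD|].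
    intros x [H|[H _]]; auto.
  - apply IHk. eapply Der_weak; [exact HD|].
    intros x [H|[-> H]]; auto. exfalso; tauto.
Qed.

Lemma lindenbaum n (y : can_pt n) a b : wf n a -> wf n b -> ~ setc y (Imp a b) ->
  exists D : can_pt n, (forall c, setc y c -> setc D c) /\ setc D a /\ ~ setc D b.
Proof.
  intros Ha Hb Hn.
  set (G0 := fun x => setc y x \/ x = a).
  assert (H0 : ~ Der G0 b).
  { intro HD. apply Hn. apply ct_closed; [simpl; auto|]. apply deduction. exact HD. }
  set (D := lim n G0 b).
  assert (HDnd : ~ Der D b).
  { intro HD. apply compact in HD. destruct HD as [k Hk]. exact (chain_nd n G0 b H0 k Hk). }
  assert (HG0 : forall c, G0 c -> D c) by (intros c Hc; exists 0; exact Hc).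
  assert (Hwf : forall c, D c -> wf n c).
  { intros c [k Hk]. revert c Hk. induction k; simpl.
    - intros c [Hc| ->]; [eapply ct_wf; eauto|auto].
    - intros c [Hc|[-> [Hw _]]]; auto. }
  assert (Hmax : forall c, wf n c -> ~ Der (fun x => D x \/ x = c) b -> D c).
  { intros c Hc Hnd. exists (S (enc c)). simpl. right. rewrite dec_enc.
    split; [reflexivity|split; [exact Hc|]].
    intro HD. apply Hnd. eapply Der_weak; [exact HD|].
    intros x [H|H]; [left; exists (enc c); exact H | right; exact H]. }
  assert (Hcl : forall c, wf n c -> Der D c -> D c).
  { intros c Hc HD. apply Hmax; auto. intro HD2. apply deduction in HD2.
    apply HDnd. eapply D_mp; eauto. }
  assert (Hpr : prime_theory n D).
  { split; [exact Hwf|split; [exact Hcl|split]].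
    - intro HB. apply HDnd. eapply D_mp; [apply D_efq|apply D_hyp; exact HB].
    - intros c d Hcd. pose proof (Hwf _ Hcd) as [Hwc Hwd].
      destruct (classic (D c)) as [|Hnc]; [left; auto|].
      destruct (classic (D d)) as [|Hnd]; [right; auto|].
      exfalso. apply HDnd.
      assert (Hc : Der (fun x => D x \/ x = c) b) by (apply NNPP; intro; apply Hnc; auto).
      assert (Hd : Der (fun x => D x \/ x = d) b) by (apply NNPP; intro; apply Hnd; auto).
      apply deduction in Hc. apply deduction in Hd.
      eapply D_mp; [|apply D_hyp; exact Hcd].
      eapply D_mp; [eapply D_mp; [apply D_orE|exact Hc]|exact Hd]. }
  exists (exist _ D Hpr). unfold setc; simpl. split; [|split].
  - intros c Hc. apply HG0. left; exact Hc.
  - apply HG0. right; reflexivity.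
  - intro HB. apply HDnd. apply D_hyp; exact HB.
Qed.

Definition goodU n (x : pt (U n)) : Prop :=
  forall y, Defs.le (U n) x y -> separated n (U n) y.

Lemma truth n a : wf n a -> forall (s : pt (SM n)), goodU n (proj1_sig s) ->
  (forces (SM n) s a <-> setc (car s) a).
Proof.
  induction a; simpl; intros Hw s Hg.
  - reflexivity.
  - split; [intros []|intro H; exact (ct_bot n _ H)].
  - destruct Hw as [Hw1 Hw2]. rewrite (IHa1 Hw1 s Hg), (IHa2 Hw2 s Hg). split.
    + intros [H1 H2]. apply ct_closed; [simpl; auto|].
      eapply D_mp; [eapply D_mp; [apply D_andI|apply D_hyp; exact H1]|apply D_hyp; exact H2].
    + intro H. split; apply ct_closed; auto;
        (eapply D_mp; [|apply D_hyp; exact H]); [apply D_and1|apply D_and2].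
  - destruct Hw as [Hw1 Hw2]. rewrite (IHa1 Hw1 s Hg), (IHa2 Hw2 s Hg). split.
    + intros [H|H]; apply ct_closed; simpl; auto;
        (eapply D_mp; [|apply D_hyp; exact H]); [apply D_or1|apply D_or2].
    + apply ct_or.
  - destruct Hw as [Hw1 Hw2]. split.
    + intro Hf. apply NNPP. intro Hn.
      destruct (lindenbaum n (car s) a1 a2 Hw1 Hw2 Hn) as [D [HsD [HDa HDb]]].
      assert (Hfin : finite_up (canonical_model n) D).
      { destruct (proj2_sig (proj1_sig s)) as [l Hl]. exists l.
        intros y Hy. apply Hl. intros c Hc. apply Hy, HsD, Hc. }
      set (DU := exist _ D Hfin : pt (U n)).
      assert (HsDU : Defs.le (U n) (proj1_sig s) DU) by exact HsD.
      set (DS := exist _ DU (Hg DU HsDU) : pt (SM n)).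
      assert (HgD : goodU n DU).
      { intros y Hy. apply Hg. intros c Hc. apply Hy, HsD, Hc. }
      apply HDb. change (setc (car DS) a2).
      apply (IHa2 Hw2 DS HgD). apply Hf; [exact HsD|].
      apply (IHa1 Hw1 DS HgD). exact HDa.
    + intros H y Hy Hya.
      assert (Hgy : goodU n (proj1_sig y)).
      { intros z Hz. apply Hg. intros c Hc. apply Hz, Hy, Hc. }
      apply (IHa2 Hw2 y Hgy). eapply ct_mp; [apply Hy; exact H|].
      apply (IHa1 Hw1 y Hgy). exact Hya.
Qed.

Theorem proposition3p7 (n : nat) (hn : 1 <= n) (x : pt (U n)) :
  M_and_imp n (U n) x <->
  (forall y : pt (U n), le (U n) x y -> separated n (U n) y).
Proof.
  split.
  - intros [f [[Hord [Hcol Hback]] [s0 Hs0]]] y Hxy. subst x.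
    destruct (Hback s0 y Hxy) as [s' [Hs0s' Hfs']].
    destruct (proj2_sig s') as [q [Hq [Hnq Hup]]].
    exists q. split; [exact Hq|split].
    + rewrite <- Hfs'. rewrite (Hcol s' q Hq). exact Hnq.
    + intros z [Hyz Hne].
      assert (Hfz : Defs.le (U n) (f s') z) by (rewrite Hfs'; exact Hyz).
      destruct (Hback s' z Hfz) as [s'' [Hs's'' Hfs'']].
      rewrite <- Hfs''. apply (Hcol s'' q Hq). simpl.
      apply Hup. split; [exact Hs's''|].
      intro E. apply Hne. rewrite <- Hfs', <- Hfs''. f_equal. apply sep_eq. exact E.
  - intros Hg. exists (fmap n). split; [apply fmap_pmorph|].
    assert (Hxx : Defs.le (U n) x x) by (intros a Ha; exact Ha).
    exists (exist _ x (Hg x Hxx)). apply U_eq. simpl. apply can_eq.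
    intro a. unfold setc at 1. simpl. unfold Th. split.
    + intros [Hw Hf]. apply (truth n a Hw (exist _ x (Hg x Hxx)) Hg). exact Hf.
    + intro Ha. assert (Hw : wf n a) by (eapply ct_wf; eauto).
      split; [exact Hw|]. apply (truth n a Hw (exist _ x (Hg x Hxx)) Hg). exact Ha.
Qed.
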